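(* Let $f\colon X\to X$ be a piecewise $\lambda$-contraction. If $\mathscr{C}=\{C_j\}_{j\in\Lambda}$ is a strongly invariant collection of pairwise disjoint open subsets of $X$, then there exist periodic orbits $\gamma_1,\dots,\gamma_r$ of $f$ contained in $\bigcup_{j\in\Lambda}C_j$ such that $\omega(f,y)\in\{\gamma_1,\dots,\gamma_r\}$ for every $y\in\bigcup_{j\in\Lambda}C_j$.
   Context: $(X,d)$ is a compact metric space whose open balls are connected, with $\mathrm{diam}(X)>0$, and $\lambda\in(0,1)$. A piecewise $\lambda$-contraction $f$: there exist $N\in\mathbb{N}$, open connected pairwise disjoint $A_1,\dots,A_N\subset X$ with dense union, and bi-Lipschitz $\varphi_i\colon X\to X$ with Lipschitz constant $\le\lambda$, $f|_{A_i}=\varphi_i|_{A_i}$. A collection $\mathscr{C}=\{C_j\}_{j\in\Lambda}$ of finitely many pairwise disjoint subsets of $X$ is strongly invariant if there is $n_0\ge1$ such that: (i) for each $A\in\mathscr{C}$ there is $A'\in\mathscr{C}$ with $f(A)\subset A'$; (ii) for each $B\in\mathscr{C}$ and $n\ge n_0$ there is $B'\in\mathscr{C}$ with $\overline{f^n(B)}\subset B'$; (iii) each $C\in\mathscr{C}$ is contained in some $A_i$. $\omega(f,y)=\bigcap_{m\ge1}\overline{\bigcup_{n\ge m}\{f^n(y)\}}$. *)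

(* Defs.v *)
From HB Require Import structures.
From mathcomp Require Import all_boot all_order all_algebra.
From mathcomp Require Import all_classical all_reals all_analysis.
Unset Implicit Arguments. Unset Printing Implicit Defensive.
Import Order.TTheory GRing.Theory Num.Theory.
Local Open Scope classical_set_scope.
Local Open Scope ring_scope.

Section defs.
Context {R : realType} {X : metricType R}.

Definition bi_lipschitz_le (lam : R) (phi : X -> X) : Prop :=
  (forall x y, mdist (phi x) (phi y) <= lam * mdist x y) /\
  (exists c : R, 0 < c /\ forall x y, c * mdist x y <= mdist (phi x) (phi y)).

Definition pc_data (lam : R) (f : X -> X) (N : nat) (A : 'I_N -> set X)
    (phi : 'I_N -> X -> X) : Prop :=
  [/\ forall i, open (A i) /\ connected (A i),
      forall i j, i != j -> A i `&` A j = set0,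
      closure (\bigcup_i A i) = setT,
      forall i, bi_lipschitz_le lam (phi i)
    & forall i x, A i x -> f x = phi i x].

Definition piecewise_contraction (lam : R) (f : X -> X) : Prop :=
  exists N (A : 'I_N -> set X) (phi : 'I_N -> X -> X), pc_data lam f N A phi.

Definition strongly_invariant (f : X -> X) (N : nat) (A : 'I_N -> set X)
    (k : nat) (C : 'I_k -> set X) : Prop :=
  [/\ forall j j', j != j' -> C j `&` C j' = set0,
      forall j, exists j', f @` C j `<=` C j',
      exists n0 : nat, (1 <= n0)%N /\
        forall j (n : nat), (n0 <= n)%N ->
          exists j', closure (iter n f @` C j) `<=` C j'
    & forall j, exists i, C j `<=` A i].

Definition omega_limit (f : X -> X) (y : X) : set X :=
  [set x | forall m : nat, (1 <= m)%N ->
     closure [set iter n f y | n in [set n : nat | (m <= n)%N]] x].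

Definition periodic_orbit (f : X -> X) (g : set X) : Prop :=
  exists (x : X) (p : nat), [/\ (0 < p)%N, iter p f x = x &
     g = [set iter n f x | n in [set n : nat | (n < p)%N]]].

End defs.

(* Main.v *)
Require Import Defs.
From HB Require Import structures.
From mathcomp Require Import all_boot all_order all_algebra.
From mathcomp Require Import all_classical all_reals all_analysis.
From mathcomp Require Import lra zify.
Import Order.TTheory GRing.Theory Num.Theory.
Local Open Scope classical_set_scope.
Local Open Scope ring_scope.

Lemma closure_mdistP (R : realType) (X : metricType R) (A : set X) x :
  closure A x <-> forall e, 0 < e -> exists a, A a /\ mdist x a < e.
Proof.
split.
- move=> cl e e0; have := cl _ (nbhsx_ballx x _ e0).
  by case=> a [Aa]; rewrite ballEmdist /= => h; exists a.
- move=> H B /nbhs_ballP [e /= e0 sB].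
  have [a [Aa da]] := H e e0; exists a; split => //; apply: sB.
  by rewrite ballEmdist.
Qed.

Lemma geom_small (R : realType) (lam D e : R) : 0 <= lam < 1 -> 0 < e ->
  exists N : nat, forall n, (N <= n)%N -> lam ^+ n * D < e.
Proof.
move=> /andP[l0 l1] e0.
have hD : 0 < `|D| + 1 by rewrite ltr_pwDr // normr_ge0.
have := @cvg_expr R lam; rewrite ger0_norm // => /(_ l1).
move=> /cvgr0_norm_lt /(_ (e / (`|D| + 1))) [].
  by rewrite divr_gt0.
move=> N _ HN; exists N => n Nn; have := HN n Nn.
rewrite normrX ger0_norm // => h.
apply: (le_lt_trans (ler_norm _)); rewrite normrM normrX ger0_norm //.
apply: (le_lt_trans (y := lam ^+ n * (`|D| + 1))).
  by rewrite ler_wpM2l ?exprn_ge0 // lerDl.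
by rewrite -ltr_pdivlMr.
Qed.
Lemma iter_mapsto (T : Type) (f : T -> T) (k : nat) (C : 'I_k -> set T)
  (sig : 'I_k -> 'I_k) : (forall j, f @` C j `<=` C (sig j)) ->
  forall n j a, C j a -> C (iter n sig j) (iter n f a).
Proof.
move=> hs; elim=> [//|n IH] j a Ca /=.
by apply: hs; exists (iter n f a) => //; apply: IH.
Qed.

Lemma iter_contr (R : realType) (X : metricType R) (lam : R) (f : X -> X)
  (k : nat) (C : 'I_k -> set X) (sig : 'I_k -> 'I_k) : 0 <= lam ->
  (forall j, f @` C j `<=` C (sig j)) ->
  (forall j a b, C j a -> C j b -> mdist (f a) (f b) <= lam * mdist a b) ->
  forall n j a b, C j a -> C j b ->
    mdist (iter n f a) (iter n f b) <= lam ^+ n * mdist a b.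
Proof.
move=> l0 hs hc; elim=> [|n IH] j a b Ca Cb /=; first by rewrite expr0 mul1r.
have M := @iter_mapsto _ f k C sig hs n j.
apply: (le_trans (hc (iter n sig j) _ _ (M _ Ca) (M _ Cb))).
by rewrite exprS -mulrA ler_wpM2l // (IH j).
Qed.

Lemma pigeon (k : nat) (sig : 'I_k -> 'I_k) (j : 'I_k) :
  exists t p, (0 < p)%N /\ iter p sig (iter t sig j) = iter t sig j.
Proof.
pose g := fun i : 'I_k.+1 => iter i sig j.
have : ~ injective g.
  move=> /leq_card. rewrite !card_ord ltnn //.
move=> /existsNP [i1 /existsNP [i2 /not_implyP [e ne]]].
rewrite /g in e.
have H : forall a b : nat, (a < b)%N -> iter a sig j = iter b sig j ->
  exists t p, (0 < p)%N /\ iter p sig (iter t sig j) = iter t sig j.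
  move=> a b ab eab; exists a, (b - a)%N; split; first by rewrite subn_gt0.
  rewrite -(iterD (b - a) a) subnK; [by [] | exact: ltnW].
case: (ltngtP i1 i2) => [lt12|lt21|eq12].
- exact: H lt12 e.
- exact: H lt21 (esym e).
- by exfalso; apply: ne; apply: val_inj.
Qed.

Lemma periodic_iter (T : Type) (h : T -> T) p w : iter p h w = w ->
  forall n, iter n h w = iter (n %% p) h w.
Proof.
move=> hp n; rewrite {1}(divn_eq n p); elim: (n %/ p)%N => [|m IH].
  by rewrite mul0n add0n.
by rewrite mulSn -addnA addnC iterD hp IH.
Qed.

Lemma min_sep (R : realType) (X : metricType R) (x : X) (o : nat -> X) p :
  (forall s, (s < p)%N -> x <> o s) ->
  exists2 d, 0 < d & forall s, (s < p)%N -> d <= mdist x (o s).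
Proof.
elim: p => [|p IH] H; first by exists 1 => //.
have [d d0 hd] := IH (fun s sp => H s (ltnW sp)).
have hp : 0 < mdist x (o p) by rewrite mdist_gt0; apply/eqP; apply: H.
exists (Num.min d (mdist x (o p))); first by rewrite lt_min d0.
move=> s; rewrite ltnS leq_eqVlt => /orP[/eqP ->|sp]; first by rewrite ge_min lexx orbT.
by rewrite ge_min hd.
Qed.

Lemma tail_near (T : Type) (u : nat -> T) (M : nat) :
  (u @ \oo) [set u m | m in [set m | (M <= m)%N]].
Proof. by exists M => // m /= Mm; exists m. Qed.

Lemma core_fixed (R : realType) (X : metricType R) (lam : R) (f : X -> X)
  (k : nat) (C : 'I_k -> set X) (sig : 'I_k -> 'I_k) (n0 : nat) :
  compact [set: X] -> 0 <= lam < 1 ->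
  (forall j, f @` C j `<=` C (sig j)) ->
  (forall j a b, C j a -> C j b -> mdist (f a) (f b) <= lam * mdist a b) ->
  (forall j j' a, C j a -> C j' a -> j = j') ->
  (forall j n, (n0 <= n)%N -> exists j', closure (iter n f @` C j) `<=` C j') ->
  forall j1 p z, (0 < p)%N -> iter p sig j1 = j1 -> C j1 z ->
  exists2 w, C j1 w & iter p f w = w.
Proof.
move=> hX hlam hs hc huniq hn0 j1 p z p0 hp Cz.
have l0 : 0 <= lam by case/andP: hlam.
have l1 : lam <= 1 by case/andP: hlam => _ /ltW.
have Hsig m : iter (m * p)%N sig j1 = j1.
  elim: m => [//|m IH]; by rewrite mulSn iterD IH hp.
pose u := fun m : nat => iter (m * p)%N f z.
have Cu m : C j1 (u m).
  by rewrite -{1}(Hsig m); apply: iter_mapsto.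
have [w [_ clw]] := hX (u @ \oo) _ filterT.
have Cw : C j1 w.
  have [j' hj'] := hn0 j1 (n0 * p)%N (leq_pmulr _ p0).
  have FA : (u @ \oo) (iter (n0 * p) f @` C j1).
    exists n0 => // m /= n0m; exists (iter ((m - n0) * p)%N f z).
      by rewrite -{1}(Hsig (m - n0)%N); apply: iter_mapsto.
    by rewrite /u -iterD -mulnDl subnKC.
  have clA : closure (iter (n0 * p) f @` C j1) w.
    by move=> B nB; apply: clw.
  have Cj' : C j' (u n0) by apply: hj'; apply: subset_closure; exists z.
  by rewrite (huniq _ _ _ (Cu n0) Cj'); apply: hj'.
exists w => //.
case: (eqVneq (iter p f w) w) => // ne; exfalso.
have e0 : 0 < mdist w (iter p f w) by rewrite mdist_gt0 eq_sym.
set e := mdist w (iter p f w) in e0.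
have e30 : 0 < e / 3 by rewrite divr_gt0.
have [N hN] := @geom_small R lam (mdist z (iter p f z)) (e / 3) hlam e30.
have [a [[m Nm <-] Bm]] := clw _ _ (@tail_near _ u N) (nbhsx_ballx w _ e30).
move: Bm; rewrite ballEmdist /= => Bm.
have um1 : u m.+1 = iter (m * p)%N f (iter p f z) by rewrite /u mulSn addnC iterD.
have um2 : u m.+1 = iter p f (u m) by rewrite /u mulSn iterD.
have d1 : mdist (u m) (u m.+1) < e / 3.
  have Cpz : C j1 (iter p f z).
    by have := @iter_mapsto _ f k C sig hs p j1 z Cz; rewrite hp.
  rewrite um1 /u; apply: (le_lt_trans (@iter_contr _ _ _ _ _ _ _ l0 hs hc (m * p)%N j1 z (iter p f z) Cz Cpz)).
  apply: hN; apply: (leq_trans Nm); exact: leq_pmulr.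
have d2 : mdist (u m.+1) (iter p f w) < e / 3.
  rewrite um2; apply: (le_lt_trans (@iter_contr _ _ _ _ _ _ _ l0 hs hc p j1 _ _ (Cu m) Cw)).
  rewrite metric_sym in Bm; apply: le_lt_trans Bm.
  by rewrite ler_piMl ?mdist_ge0 // exprn_ile1.
have t1 := metric_triangle w (u m) (iter p f w).
have t2 := metric_triangle (u m) (u m.+1) (iter p f w).
rewrite -/e in t1.
lra.
Qed.

Lemma omega_orbit (R : realType) (X : metricType R) (lam : R) (f : X -> X)
  (k : nat) (C : 'I_k -> set X) (sig : 'I_k -> 'I_k) :
  0 <= lam < 1 ->
  (forall j, f @` C j `<=` C (sig j)) ->
  (forall j a b, C j a -> C j b -> mdist (f a) (f b) <= lam * mdist a b) ->
  forall j t j1 p w, (0 < p)%N -> iter t sig j = j1 -> C j1 w ->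
  iter p f w = w ->
  forall y, C j y ->
  omega_limit f y = [set iter n f w | n in [set n : nat | (n < p)%N]].
Proof.
move=> hlam hs hc j t j1 p w p0 hj1 Cw hp y Cy.
have l0 : 0 <= lam by case/andP: hlam.
have Cz : C j1 (iter t f y).
  by rewrite -hj1; apply: iter_mapsto.
set D := mdist (iter t f y) w.
have key n : mdist (iter (n + t) f y) (iter n f w) <= lam ^+ n * D.
  by rewrite iterD; apply: (@iter_contr _ _ _ _ _ _ _ l0 hs hc n j1 _ _ Cz Cw).
have per := @periodic_iter _ f p w hp.
apply/seteqP; split.
- move=> x omx; apply: contrapT => nO.
  have hx : forall s, (s < p)%N -> x <> iter s f w.
    by move=> s sp ex; apply: nO; exists s.
  have [d d0 hd] := @min_sep R X x (fun s => iter s f w) p hx.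
  have d20 : 0 < d / 2 by rewrite divr_gt0.
  have [N hN] := @geom_small R lam D (d / 2) hlam d20.
  have := omx (t + N).+1 isT.
  move=> /closure_mdistP /(_ _ d20) [a [[n tn <-] dxa]].
  move: tn => /= tn. have tn' : (t <= n)%N by lia.
  have Nn : (N <= n - t)%N by lia.
  have k1 := key (n - t)%N; rewrite subnK // in k1.
  have k2 := hN _ Nn.
  have k3 := hd _ (ltn_pmod (n - t)%N p0); rewrite /= -per in k3.
  have t1 := metric_triangle x (iter n f y) (iter (n - t)%N f w).
  lra.
- move=> x [s sp <-] m m1; apply/closure_mdistP => e e0.
  have [N hN] := @geom_small R lam D e hlam e0.
  set n := ((m + N) * p + s)%N.
  have mp : (m + N <= (m + N) * p)%N by rewrite leq_pmulr.
  exists (iter (n + t) f y); split.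
    exists (n + t)%N => //=.
    apply: (leq_trans (leq_addr N m)); apply: (leq_trans mp).
    by rewrite /n -addnA leq_addr.
  have -> : iter s f w = iter n f w by rewrite [RHS]per /n modnMDl modn_small.
  rewrite metric_sym; apply: (le_lt_trans (key n)); apply: hN.
  apply: (leq_trans (leq_addl m N)); apply: (leq_trans mp).
  by rewrite /n leq_addr.
Qed.

Theorem lemma3p5 (R : realType) (X : metricType R) (lam : R)
  (hX : compact [set: X])
  (hballs : forall (x : X) (r : R), connected (ball x r))
  (hdiam : exists x y : X, 0 < mdist x y)
  (hlam : 0 < lam < 1)
  (f : X -> X) (N : nat) (A : 'I_N -> set X) (phi : 'I_N -> X -> X)
  (hf : pc_data lam f N A phi)
  (k : nat) (C : 'I_k -> set X)
  (hCopen : forall j, open (C j))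
  (hC : strongly_invariant f N A k C) :
  exists (r : nat) (g : 'I_r -> set X),
    (forall l, periodic_orbit f (g l) /\ g l `<=` \bigcup_j C j) /\
    (forall y, (\bigcup_j C j) y -> exists l, omega_limit f y = g l).
Proof.
move: hf => [hA hdisj hdense hphi hfA].
move: hC => [hCd hCf [n0 [n01 hn0]] hCA].
have hlam' : 0 <= lam < 1 by case/andP: hlam => l0 l1; rewrite ltW.
have [sig hs] := choice hCf.
have [ia hia] := choice hCA.
have hc : forall j a b, C j a -> C j b -> mdist (f a) (f b) <= lam * mdist a b.
  move=> j a b Ca Cb.
  rewrite (hfA (ia j) a (hia j a Ca)) (hfA (ia j) b (hia j b Cb)).
  exact: (hphi (ia j)).1.
have huniq : forall j j' a, C j a -> C j' a -> j = j'.
  move=> j j' a Ca Ca'; case: (eqVneq j j') => // /hCd E.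
  by have : (C j `&` C j') a by []; rewrite E.
have Hne : forall j y, C j y -> exists G : set X,
    [/\ periodic_orbit f G, G `<=` \bigcup_j C j &
        forall y', C j y' -> omega_limit f y' = G].
  move=> j y Cy.
  have [t [p [p0 hp]]] := @pigeon k sig j.
  set j1 := iter t sig j in hp.
  have Cz : C j1 (iter t f y) by apply: iter_mapsto.
  have [w Cw hw] := @core_fixed R X lam f k C sig n0 hX hlam' hs hc huniq hn0
    j1 p (iter t f y) p0 hp Cz.
  exists [set iter n f w | n in [set n : nat | (n < p)%N]]; split.
  - by exists w, p; split.
  - move=> _ [s _ <-]; exists (iter s sig j1) => //; exact: iter_mapsto.
  - move=> y' Cy'.
    exact: (@omega_orbit R X lam f k C sig hlam' hs hc j t j1 p w p0 erefl Cw hw y' Cy').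
case: (pselect (exists j y, C j y)) => [[j0 [y0 Cy0]] | none].
- have H : forall j, exists G : set X,
    [/\ periodic_orbit f G, G `<=` \bigcup_j C j &
        forall y', C j y' -> omega_limit f y' = G].
    move=> j; case: (pselect (exists y, C j y)) => [[y Cy]|nj].
      exact: Hne Cy.
    have [G [h1 h2 h3]] := Hne j0 y0 Cy0; exists G; split => // y Cy.
    by exfalso; apply: nj; exists y.
  have [g hg] := choice H.
  exists k, g; split.
    by move=> l; have [h1 h2 _] := hg l.
  move=> y [j _ Cy]; exists j; have [_ _ h3] := hg j; exact: h3.
- exists 0%N, (fun _ => set0); split; first by case.
  move=> y [j _ Cy]; exfalso; apply: none; exists j, y.
  done.
Qed.
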